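(* For every $m\in\mathbb N_0$, the polynomial $P_m$ is left hyperholomorphic on $\mathbb H$ and $P_m(0,x_1,x_2,x_3)=(x_1\mathbf e_1+x_2\mathbf e_2+x_3\mathbf e_3)^m$; that is, $CK\big((x_1\mathbf e_1+x_2\mathbf e_2+x_3\mathbf e_3)^m\big)=P_m$. In particular $P_1(x)=\zeta_1(x)\mathbf e_1+\zeta_2(x)\mathbf e_2+\zeta_3(x)\mathbf e_3=3x_0+x_1\mathbf e_1+x_2\mathbf e_2+x_3\mathbf e_3$.
   Context: Quaternions: $x=x_0+\underline{x}$ with $\underline{x}=x_1\mathbf e_1+x_2\mathbf e_2+x_3\mathbf e_3$, $\overline{x}=x_0-\underline{x}$. Left hyperholomorphic means annihilated by $D=\partial_{x_0}+\mathbf e_1\partial_{x_1}+\mathbf e_2\partial_{x_2}+\mathbf e_3\partial_{x_3}$; $CK(\varphi)$ denotes the unique left hyperholomorphic extension of a real analytic function $\varphi$ of $(x_1,x_2,x_3)$ from $x_0=0$. Fueter variables: $\zeta_j(x)=x_j-\mathbf e_jx_0$. For $m\ge0$ and $0\le j\le m$ let $T^m_j=\frac{2(m-j+1)}{(m+1)(m+2)}$, $c_m=\sum_{j=0}^m(-1)^jT^m_j$, and $P_m(x)=\frac1{c_m}\sum_{j=0}^mT^m_j\,x^{m-j}\overline{x}^{\,j}$. *)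

(* Defs.v *)
(* quaternions over an abstract realType R,
   represented as row vectors 'rV[R]_4 (components x_0, x_1, x_2, x_3),
   which carries the normed-space structure needed for derivatives. *)
From HB Require Import structures.
From mathcomp Require Import all_boot all_order all_algebra.
From mathcomp Require Import all_classical all_reals.
From mathcomp Require Import topology normedtype derive.
Set Implicit Arguments. Unset Strict Implicit. Unset Printing Implicit Defensive.
Import Order.TTheory GRing.Theory Num.Theory.
Import numFieldNormedType.Exports.
Local Open Scope ring_scope.

Section Quaternions.
Variable R : realType.

Definition quat := 'rV[R]_4.

Definition qmk (a b c d : R) : quat := \row_(i < 4) [:: a; b; c; d]`_i.

Definition q0 (x : quat) : R := x 0 (inord 0).
Definition q1 (x : quat) : R := x 0 (inord 1).
Definition q2 (x : quat) : R := x 0 (inord 2).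
Definition q3 (x : quat) : R := x 0 (inord 3).

(* Hamilton product, e1 e2 = e3, e2 e3 = e1, e3 e1 = e2, e_i^2 = -1 *)
Definition qmul (p q : quat) : quat :=
  qmk (q0 p * q0 q - q1 p * q1 q - q2 p * q2 q - q3 p * q3 q)
      (q0 p * q1 q + q1 p * q0 q + q2 p * q3 q - q3 p * q2 q)
      (q0 p * q2 q - q1 p * q3 q + q2 p * q0 q + q3 p * q1 q)
      (q0 p * q3 q + q1 p * q2 q - q2 p * q1 q + q3 p * q0 q).

Definition qone : quat := qmk 1 0 0 0.
Definition qe1 : quat := qmk 0 1 0 0.
Definition qe2 : quat := qmk 0 0 1 0.
Definition qe3 : quat := qmk 0 0 0 1.

Definition qconj (x : quat) : quat := qmk (q0 x) (- q1 x) (- q2 x) (- q3 x).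

Definition qpow (x : quat) (n : nat) : quat := iter n (qmul x) qone.

Definition Dop (f : quat -> quat) (x : quat) : quat :=
  'D_qone f x + qmul qe1 ('D_qe1 f x) + qmul qe2 ('D_qe2 f x)
  + qmul qe3 ('D_qe3 f x).

Definition left_hyperholomorphic (f : quat -> quat) : Prop :=
  (forall x, differentiable f x) /\ (forall x, Dop f x = 0).

Definition is_CK_extension (phi : R -> R -> R -> quat) (F : quat -> quat) :=
  left_hyperholomorphic F /\
  (forall x1 x2 x3, F (qmk 0 x1 x2 x3) = phi x1 x2 x3).

Definition zeta1 (x : quat) : quat := qmk (q1 x) 0 0 0 - q0 x *: qe1.
Definition zeta2 (x : quat) : quat := qmk (q2 x) 0 0 0 - q0 x *: qe2.
Definition zeta3 (x : quat) : quat := qmk (q3 x) 0 0 0 - q0 x *: qe3.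

Definition Tcoef (m j : nat) : R :=
  (2 * (m - j + 1)%:R) / ((m + 1)%:R * (m + 2)%:R).

Definition cm (m : nat) : R := \sum_(j < m.+1) (-1) ^+ j * Tcoef m j.

Definition Pm (m : nat) (x : quat) : quat :=
  (cm m)^-1 *: \sum_(j < m.+1)
     Tcoef m j *: qmul (qpow x (m - j)) (qpow (qconj x) j).

End Quaternions.

(* Main.v *)
Require Import Defs.
From HB Require Import structures.
From mathcomp Require Import all_boot all_order all_algebra.
From mathcomp Require Import all_classical all_reals.
From mathcomp Require Import topology normedtype derive.
From mathcomp Require Import zify ring lra.
Import GRing.Theory Num.Theory.
Import numFieldNormedType.Exports.
Local Open Scope ring_scope.

Section T.
Variable R : realType.
Local Notation Q := (quat R).
Implicit Types p q r x y : Q.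
Local Notation Q1 := (qone R).
Local Notation E1 := (qe1 R).
Local Notation E2 := (qe2 R).
Local Notation E3 := (qe3 R).

Lemma qE x : x = qmk (q0 x) (q1 x) (q2 x) (q3 x).
Proof.
apply/rowP => i; rewrite /qmk mxE /q0 /q1 /q2 /q3.
have i0 : (0 : 'I_1) = 0 by [].
case: i => [[|[|[|[|//]]]] Hi] /=; congr (x _ _); apply/val_inj; rewrite /= inordK //.
Qed.

Lemma qP p q : q0 p = q0 q -> q1 p = q1 q -> q2 p = q2 q -> q3 p = q3 q -> p = q.
Proof. by move=> a b c d; rewrite (qE p) (qE q) a b c d. Qed.

Ltac qsimp := rewrite /qmul /qconj /zeta1 /zeta2 /zeta3 /qone /qe1 /qe2 /qe3 /q0 /q1 /q2 /q3 /qmk;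
  rewrite ?mxE ?inordK //=.
Ltac gen := repeat match goal with |- context [@fun_of_matrix _ _ _ ?x _ (@inord _ ?k)] => let t := fresh "t" in generalize (@fun_of_matrix _ _ _ x 0 (@inord 3 k)) => t end.
Ltac qring := apply: qP; qsimp; gen; ring.

Lemma q0mul (p : Q) (q : Q) : q0 (qmul p q) = q0 p * q0 q - q1 p * q1 q - q2 p * q2 q - q3 p * q3 q.
Proof. by qsimp. Qed.
Lemma q0mk  (a b c d : R) : q0 (qmk a b c d) = a.
Proof. by qsimp. Qed.
Lemma q0cj (p : Q) : q0 (qconj p) = q0 p.
Proof. by qsimp. Qed.
Lemma q0D (p : Q) (q : Q) : q0 (p + q) = q0 p + q0 q.
Proof. by qsimp. Qed.
Lemma q0N (p : Q) : q0 (- p) = - q0 p.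
Proof. by qsimp. Qed.
Lemma q0Z (p : Q) (k : R) : q0 (k *: p) = k * q0 p.
Proof. by qsimp. Qed.
Lemma q00  : q0 (0 : Q) = 0.
Proof. by qsimp. Qed.
Lemma q01  : q0 Q1 = 1.
Proof. by qsimp. Qed.
Lemma q0e1  : q0 E1 = 0.
Proof. by qsimp. Qed.
Lemma q0e2  : q0 E2 = 0.
Proof. by qsimp. Qed.
Lemma q0e3  : q0 E3 = 0.
Proof. by qsimp. Qed.
Lemma q1mul (p : Q) (q : Q) : q1 (qmul p q) = q0 p * q1 q + q1 p * q0 q + q2 p * q3 q - q3 p * q2 q.
Proof. by qsimp. Qed.
Lemma q1mk  (a b c d : R) : q1 (qmk a b c d) = b.
Proof. by qsimp. Qed.
Lemma q1cj (p : Q) : q1 (qconj p) = - q1 p.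
Proof. by qsimp. Qed.
Lemma q1D (p : Q) (q : Q) : q1 (p + q) = q1 p + q1 q.
Proof. by qsimp. Qed.
Lemma q1N (p : Q) : q1 (- p) = - q1 p.
Proof. by qsimp. Qed.
Lemma q1Z (p : Q) (k : R) : q1 (k *: p) = k * q1 p.
Proof. by qsimp. Qed.
Lemma q10  : q1 (0 : Q) = 0.
Proof. by qsimp. Qed.
Lemma q11  : q1 Q1 = 0.
Proof. by qsimp. Qed.
Lemma q1e1  : q1 E1 = 1.
Proof. by qsimp. Qed.
Lemma q1e2  : q1 E2 = 0.
Proof. by qsimp. Qed.
Lemma q1e3  : q1 E3 = 0.
Proof. by qsimp. Qed.
Lemma q2mul (p : Q) (q : Q) : q2 (qmul p q) = q0 p * q2 q - q1 p * q3 q + q2 p * q0 q + q3 p * q1 q.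
Proof. by qsimp. Qed.
Lemma q2mk  (a b c d : R) : q2 (qmk a b c d) = c.
Proof. by qsimp. Qed.
Lemma q2cj (p : Q) : q2 (qconj p) = - q2 p.
Proof. by qsimp. Qed.
Lemma q2D (p : Q) (q : Q) : q2 (p + q) = q2 p + q2 q.
Proof. by qsimp. Qed.
Lemma q2N (p : Q) : q2 (- p) = - q2 p.
Proof. by qsimp. Qed.
Lemma q2Z (p : Q) (k : R) : q2 (k *: p) = k * q2 p.
Proof. by qsimp. Qed.
Lemma q20  : q2 (0 : Q) = 0.
Proof. by qsimp. Qed.
Lemma q21  : q2 Q1 = 0.
Proof. by qsimp. Qed.
Lemma q2e1  : q2 E1 = 0.
Proof. by qsimp. Qed.
Lemma q2e2  : q2 E2 = 1.
Proof. by qsimp. Qed.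
Lemma q2e3  : q2 E3 = 0.
Proof. by qsimp. Qed.
Lemma q3mul (p : Q) (q : Q) : q3 (qmul p q) = q0 p * q3 q + q1 p * q2 q - q2 p * q1 q + q3 p * q0 q.
Proof. by qsimp. Qed.
Lemma q3mk  (a b c d : R) : q3 (qmk a b c d) = d.
Proof. by qsimp. Qed.
Lemma q3cj (p : Q) : q3 (qconj p) = - q3 p.
Proof. by qsimp. Qed.
Lemma q3D (p : Q) (q : Q) : q3 (p + q) = q3 p + q3 q.
Proof. by qsimp. Qed.
Lemma q3N (p : Q) : q3 (- p) = - q3 p.
Proof. by qsimp. Qed.
Lemma q3Z (p : Q) (k : R) : q3 (k *: p) = k * q3 p.
Proof. by qsimp. Qed.
Lemma q30  : q3 (0 : Q) = 0.
Proof. by qsimp. Qed.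
Lemma q31  : q3 Q1 = 0.
Proof. by qsimp. Qed.
Lemma q3e1  : q3 E1 = 0.
Proof. by qsimp. Qed.
Lemma q3e2  : q3 E2 = 0.
Proof. by qsimp. Qed.
Lemma q3e3  : q3 E3 = 1.
Proof. by qsimp. Qed.
Lemma qB (p q : Q) : p - q = p + - q. Proof. by []. Qed.
Ltac qsimp2 := repeat progress (rewrite ?qB ?q0mul ?q0mk ?q0cj ?q0D ?q0N ?q0Z ?q00 ?q01 ?q0e1 ?q0e2 ?q0e3 ?q1mul ?q1mk ?q1cj ?q1D ?q1N ?q1Z ?q10 ?q11 ?q1e1 ?q1e2 ?q1e3 ?q2mul ?q2mk ?q2cj ?q2D ?q2N ?q2Z ?q20 ?q21 ?q2e1 ?q2e2 ?q2e3 ?q3mul ?q3mk ?q3cj ?q3D ?q3N ?q3Z ?q30 ?q31 ?q3e1 ?q3e2 ?q3e3).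
Ltac qring2 := apply: qP; qsimp2; ring.
Lemma qmulA p q r : qmul p (qmul q r) = qmul (qmul p q) r.
Proof. qring2. Qed.
Lemma qmul1 p : qmul Q1 p = p.
Proof. qring2. Qed.
Lemma qmulr1 p : qmul p Q1 = p.
Proof. qring2. Qed.
Lemma qmulDl p q r : qmul (p + q) r = qmul p r + qmul q r.
Proof. qring2. Qed.
Lemma qmulDr p q r : qmul r (p + q) = qmul r p + qmul r q.
Proof. qring2. Qed.
Lemma qmulZl (a : R) p q : qmul (a *: p) q = a *: qmul p q.
Proof. qring2. Qed.
Lemma qmulZr (a : R) p q : qmul q (a *: p) = a *: qmul q p.
Proof. qring2. Qed.
Lemma qconj_mul p q : qconj (qmul p q) = qmul (qconj q) (qconj p).
Proof. qring2. Qed.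
Lemma qconjK p : qconj (qconj p) = p.
Proof. qring2. Qed.
Lemma qconj_comm p : qmul p (qconj p) = qmul (qconj p) p.
Proof. qring2. Qed.
Lemma sandw q : q + qmul E1 (qmul q E1) + qmul E2 (qmul q E2) + qmul E3 (qmul q E3)
  = (-2) *: qconj q.
Proof. qring2. Qed.
Lemma sandw2 q : q - qmul E1 (qmul q E1) - qmul E2 (qmul q E2) - qmul E3 (qmul q E3)
  = 2 *: (q + qconj q).
Proof. qring2. Qed.

Lemma qmk_dec (a b c d : R) : qmk a b c d = a *: Q1 + b *: E1 + c *: E2 + d *: E3.
Proof. qring2. Qed.
Lemma qmul0l p : qmul 0 p = 0.
Proof. qring2. Qed.
Lemma qmul0r p : qmul p 0 = 0.
Proof. qring2. Qed.
Lemma qconj0 : qconj (0 : Q) = 0.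
Proof. qring2. Qed.
Lemma qconj1 : qconj Q1 = Q1.
Proof. qring2. Qed.
Lemma qconjD p q : qconj (p + q) = qconj p + qconj q.
Proof. qring2. Qed.
Lemma qconjZ (k : R) p : qconj (k *: p) = k *: qconj p.
Proof. qring2. Qed.
Lemma qmul_suml n (F : 'I_n -> Q) q : qmul (\sum_(i < n) F i) q = \sum_(i < n) qmul (F i) q.
Proof. exact: (big_morph (fun p => qmul p q) (fun a b => qmulDl a b q) (qmul0l q)). Qed.
Lemma qmul_sumr n (F : 'I_n -> Q) q : qmul q (\sum_(i < n) F i) = \sum_(i < n) qmul q (F i).
Proof. exact: (big_morph (fun p => qmul q p) (fun a b => qmulDr a b q) (qmul0r q)). Qed.
Lemma q0sum n (F : 'I_n -> Q) : q0 (\sum_(i < n) F i) = \sum_(i < n) q0 (F i).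
Proof. exact: (big_morph _ q0D q00). Qed.
Lemma q1sum n (F : 'I_n -> Q) : q1 (\sum_(i < n) F i) = \sum_(i < n) q1 (F i).
Proof. exact: (big_morph _ q1D q10). Qed.
Lemma q2sum n (F : 'I_n -> Q) : q2 (\sum_(i < n) F i) = \sum_(i < n) q2 (F i).
Proof. exact: (big_morph _ q2D q20). Qed.
Lemma q3sum n (F : 'I_n -> Q) : q3 (\sum_(i < n) F i) = \sum_(i < n) q3 (F i).
Proof. exact: (big_morph _ q3D q30). Qed.

Lemma qpowS x n : qpow x n.+1 = qmul x (qpow x n).
Proof. by []. Qed.
Lemma qpow0 x : qpow x 0 = Q1.
Proof. by []. Qed.
Lemma qpowSr x n : qpow x n.+1 = qmul (qpow x n) x.
Proof.
elim: n => [|n IH]; first by rewrite qpowS qpow0 qmul1 qmulr1.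
by rewrite {1}qpowS {1}IH qmulA -qpowS.
Qed.
Lemma qpowD x a b : qmul (qpow x a) (qpow x b) = qpow x (a + b).
Proof.
elim: a => [|a IH]; first by rewrite qpow0 qmul1.
by rewrite qpowS -qmulA IH addSn.
Qed.
Lemma qpow_comm x y n : qmul x y = qmul y x -> qmul (qpow x n) y = qmul y (qpow x n).
Proof.
move=> H; elim: n => [|n IH]; first by rewrite qpow0 qmul1 qmulr1.
by rewrite qpowS -qmulA IH qmulA H -qmulA.
Qed.
Lemma qpow_comm2 x y a b : qmul x y = qmul y x ->
  qmul (qpow x a) (qpow y b) = qmul (qpow y b) (qpow x a).
Proof.
move=> H; apply: qpow_comm; symmetry; exact: qpow_comm.
Qed.
Lemma qconj_pow x n : qconj (qpow x n) = qpow (qconj x) n.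
Proof.
elim: n => [|n IH]; first by rewrite qpow0 qconj1.
by rewrite qpowS qconj_mul IH -qpowSr.
Qed.
Lemma qpowZ (k : R) x n : qpow (k *: x) n = k ^+ n *: qpow x n.
Proof.
elim: n => [|n IH]; first by rewrite qpow0 expr0 scale1r.
by rewrite qpowS IH qmulZl qmulZr scalerA exprS.
Qed.
End T.
Ltac qsimp2 := repeat progress (rewrite ?qB ?q0mul ?q0mk ?q0cj ?q0D ?q0N ?q0Z ?q00 ?q01 ?q0e1 ?q0e2 ?q0e3 ?q1mul ?q1mk ?q1cj ?q1D ?q1N ?q1Z ?q10 ?q11 ?q1e1 ?q1e2 ?q1e3 ?q2mul ?q2mk ?q2cj ?q2D ?q2N ?q2Z ?q20 ?q21 ?q2e1 ?q2e2 ?q2e3 ?q3mul ?q3mk ?q3cj ?q3D ?q3N ?q3Z ?q30 ?q31 ?q3e1 ?q3e2 ?q3e3).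
Ltac qring2 := apply: qP; qsimp2; ring.

Section D.
Variable R : realType.
Local Notation Q := (quat R).
Implicit Types p q r x y : Q.
Local Notation Q1 := (qone R).
Local Notation E1 := (qe1 R).
Local Notation E2 := (qe2 R).
Local Notation E3 := (qe3 R).

Definition smooth (f : Q -> Q) := forall x, differentiable f x.

Lemma dfB (F G : Q -> R) x : differentiable F x -> differentiable G x ->
  differentiable (fun y => F y - G y) x.
Proof. move=> a b. exact: differentiableB. Qed.
Lemma dfD (F G : Q -> R) x : differentiable F x -> differentiable G x ->
  differentiable (fun y => F y + G y) x.
Proof. move=> a b. exact: differentiableD. Qed.
Lemma dfM (F G : Q -> R) x : differentiable F x -> differentiable G x ->
  differentiable (fun y => F y * G y) x.
Proof. move=> a b. exact: differentiableM. Qed.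
Lemma dfN (F : Q -> R) x : differentiable F x -> differentiable (fun y => - F y) x.
Proof. move=> a. exact: differentiableN. Qed.
Lemma dc0 f x : differentiable f x -> differentiable (fun y => q0 (f y)) x.
Proof. move=> a. apply: differentiable_comp => //. exact: differentiable_coord. Qed.
Lemma dc1 f x : differentiable f x -> differentiable (fun y => q1 (f y)) x.
Proof. move=> a. apply: differentiable_comp => //. exact: differentiable_coord. Qed.
Lemma dc2 f x : differentiable f x -> differentiable (fun y => q2 (f y)) x.
Proof. move=> a. apply: differentiable_comp => //. exact: differentiable_coord. Qed.
Lemma dc3 f x : differentiable f x -> differentiable (fun y => q3 (f y)) x.
Proof. move=> a. apply: differentiable_comp => //. exact: differentiable_coord. Qed.

Lemma dqmk (F0 F1 F2 F3 : Q -> R) x : differentiable F0 x -> differentiable F1 x ->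
  differentiable F2 x -> differentiable F3 x ->
  differentiable (fun y => qmk (F0 y) (F1 y) (F2 y) (F3 y)) x.
Proof.
move=> a b c d.
rewrite (_ : (fun y => _) = (fun y => F0 y *: Q1 + F1 y *: E1 + F2 y *: E2 + F3 y *: E3)); last first.
  by apply: funext => y; rewrite qmk_dec.
apply: differentiableD; [apply: differentiableD; [apply: differentiableD|]|];
  exact: differentiableZl.
Qed.

Ltac dtac := repeat first [ apply: dfB | apply: dfD | apply: dfM | apply: dfN
  | apply: dc0 | apply: dc1 | apply: dc2 | apply: dc3 ].

Lemma smooth_mul f g : smooth f -> smooth g -> smooth (fun y => qmul (f y) (g y)).
Proof. move=> hf hg x; rewrite /qmul; apply: dqmk; dtac; by [apply: hf | apply: hg]. Qed.
Lemma smooth_conj f : smooth f -> smooth (fun y => qconj (f y)).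
Proof. move=> hf x; rewrite /qconj; apply: dqmk; dtac; by apply: hf. Qed.
Lemma smooth_id : smooth (fun y => y).
Proof. move=> x. have H : differentiable (@id Q) x by []. exact: H. Qed.
Lemma smooth_cst c : smooth (fun _ => c).
Proof. move=> x; exact: differentiable_cst. Qed.
Lemma smooth_pow f n : smooth f -> smooth (fun y => qpow (f y) n).
Proof.
move=> hf; elim: n => [|n IH]; first exact: smooth_cst.
exact: smooth_mul.
Qed.
Lemma smooth_scale (k : R) f : smooth f -> smooth (fun y => k *: f y).
Proof. move=> hf x; apply: differentiableZ; exact: hf. Qed.
Lemma smooth_sum n (F : 'I_n -> Q -> Q) : (forall i, smooth (F i)) ->
  smooth (fun y => \sum_(i < n) F i y).
Proof.
move=> hF x; rewrite -fct_sumE; apply: differentiable_sum => i; exact: hF.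
Qed.

Lemma Dc0 f x v : differentiable f x -> q0 ('D_v f x) = 'D_v (fun y => q0 (f y)) x.
Proof. move=> h; rewrite derive_mx; [by rewrite /q0 mxE | exact: diff_derivable]. Qed.
Lemma Dc1 f x v : differentiable f x -> q1 ('D_v f x) = 'D_v (fun y => q1 (f y)) x.
Proof. move=> h; rewrite derive_mx; [by rewrite /q1 mxE | exact: diff_derivable]. Qed.
Lemma Dc2 f x v : differentiable f x -> q2 ('D_v f x) = 'D_v (fun y => q2 (f y)) x.
Proof. move=> h; rewrite derive_mx; [by rewrite /q2 mxE | exact: diff_derivable]. Qed.
Lemma Dc3 f x v : differentiable f x -> q3 ('D_v f x) = 'D_v (fun y => q3 (f y)) x.
Proof. move=> h; rewrite derive_mx; [by rewrite /q3 mxE | exact: diff_derivable]. Qed.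

Lemma ddB (F G : Q -> R) x v : differentiable F x -> differentiable G x ->
  'D_v (fun y => F y - G y) x = 'D_v F x - 'D_v G x.
Proof. move=> a b. apply: deriveB; exact: diff_derivable. Qed.
Lemma ddD (F G : Q -> R) x v : differentiable F x -> differentiable G x ->
  'D_v (fun y => F y + G y) x = 'D_v F x + 'D_v G x.
Proof. move=> a b. apply: deriveD; exact: diff_derivable. Qed.
Lemma ddM (F G : Q -> R) x v : differentiable F x -> differentiable G x ->
  'D_v (fun y => F y * G y) x = F x * 'D_v G x + G x * 'D_v F x.
Proof. move=> a b. apply: deriveM; exact: diff_derivable. Qed.
Lemma ddN (F : Q -> R) x v : differentiable F x ->
  'D_v (fun y => - F y) x = - 'D_v F x.
Proof. move=> a. apply: deriveN; exact: diff_derivable. Qed.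

Lemma D_mul f g x v : smooth f -> smooth g ->
  'D_v (fun y => qmul (f y) (g y)) x = qmul ('D_v f x) (g x) + qmul (f x) ('D_v g x).
Proof.
move=> hf hg; have hm : smooth (fun y => qmul (f y) (g y)) by apply: smooth_mul.
have e0 := funext (fun y => @q0mul R (f y) (g y)).
have e1 := funext (fun y => @q1mul R (f y) (g y)).
have e2 := funext (fun y => @q2mul R (f y) (g y)).
have e3 := funext (fun y => @q3mul R (f y) (g y)).
apply: qP; qsimp2; rewrite ?Dc0 ?Dc1 ?Dc2 ?Dc3 // ?e0 ?e1 ?e2 ?e3;
(repeat progress rewrite ?ddB ?ddD ?ddM ?ddN);
try (dtac; by [apply: hf | apply: hg]); ring.
Qed.

Lemma D_conj f x v : smooth f ->
  'D_v (fun y => qconj (f y)) x = qconj ('D_v f x).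
Proof.
move=> hf; have hm : smooth (fun y => qconj (f y)) by apply: smooth_conj.
have e0 := funext (fun y => @q0cj R (f y)).
have e1 := funext (fun y => @q1cj R (f y)).
have e2 := funext (fun y => @q2cj R (f y)).
have e3 := funext (fun y => @q3cj R (f y)).
apply: qP; qsimp2; rewrite ?Dc0 ?Dc1 ?Dc2 ?Dc3 // ?e0 ?e1 ?e2 ?e3 // ddN //; apply: dc1 || apply: dc2 || apply: dc3; exact: hf.
Qed.

Lemma D_id x v : 'D_v (fun y : Q => y) x = v.
Proof. exact: derive_id. Qed.

Lemma D_cst (c : Q) x v : 'D_v (fun y : Q => c) x = 0.
Proof. exact: derive_cst. Qed.

Lemma D_scale (k : R) f x v : smooth f -> 'D_v (fun y => k *: f y) x = k *: 'D_v f x.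
Proof. move=> hf; apply: deriveZ; exact: diff_derivable. Qed.

Lemma D_sum n (F : 'I_n -> Q -> Q) x v : (forall i, smooth (F i)) ->
  'D_v (fun y => \sum_(i < n) F i y) x = \sum_(i < n) 'D_v (F i) x.
Proof.
move=> hF; rewrite -fct_sumE; apply: derive_sum => i; apply: diff_derivable; exact: hF.
Qed.

Lemma D_pow f n x u : smooth f ->
  'D_u (fun y => qpow (f y) n) x =
  \sum_(k < n) qmul (qmul (qpow (f x) k) ('D_u f x)) (qpow (f x) (n - k.+1)).
Proof.
move=> hf; elim: n => [|n IH]; first by rewrite big_ord0; exact: D_cst.
rewrite (_ : (fun y => qpow (f y) n.+1) = (fun y => qmul (f y) (qpow (f y) n))) //.
rewrite D_mul //; last exact: smooth_pow.
rewrite IH big_ord_recl qpow0 qmul1 subSS subn0 qmul_sumr; congr (_ + _).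
apply: eq_bigr => k _; rewrite !qmulA -qpowS /=; congr (qmul _ (qpow _ _)).
Qed.
End D.

Section E.
Variable R : realType.
Local Notation Q := (quat R).
Implicit Types p q r x y : Q.
Local Notation Q1 := (qone R).
Local Notation E1 := (qe1 R).
Local Notation E2 := (qe2 R).
Local Notation E3 := (qe3 R).

Ltac qsum := apply: qP; repeat progress (rewrite ?qB ?q0D ?q1D ?q2D ?q3D ?q0N ?q1N ?q2N ?q3N ?q0sum ?q1sum ?q2sum ?q3sum); ring.

Lemma Dop_gen f x a b (A B C E : nat -> Q) :
 (forall u, 'D_u f x = \sum_(k < a) qmul (qmul (A k) u) (B k)
     + \sum_(k < b) qmul (qmul (C k) (qconj u)) (E k)) ->
 Dop f x = \sum_(k < a) qmul ((-2) *: qconj (A k)) (B k)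
     + \sum_(k < b) qmul (2 *: (C k + qconj (C k))) (E k).
Proof.
move=> H; rewrite /Dop !H.
have hA : \sum_(k < a) qmul ((-2) *: qconj (A k)) (B k) =
   \sum_(k < a) qmul (qmul (A k) Q1) (B k) + \sum_(k < a) qmul E1 (qmul (qmul (A k) E1) (B k))
   + \sum_(k < a) qmul E2 (qmul (qmul (A k) E2) (B k)) + \sum_(k < a) qmul E3 (qmul (qmul (A k) E3) (B k)).
  by rewrite -!big_split; apply: eq_bigr => k _ /=; qring2.
have hC : \sum_(k < b) qmul (2 *: (C k + qconj (C k))) (E k) =
   \sum_(k < b) qmul (qmul (C k) (qconj Q1)) (E k) + \sum_(k < b) qmul E1 (qmul (qmul (C k) (qconj E1)) (E k))
   + \sum_(k < b) qmul E2 (qmul (qmul (C k) (qconj E2)) (E k)) + \sum_(k < b) qmul E3 (qmul (qmul (C k) (qconj E3)) (E k)).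
  by rewrite -!big_split; apply: eq_bigr => k _ /=; qring2.
rewrite hA hC !qmulDr !qmul_sumr.
qsum.
Qed.
End E.

Section C.
Variable V : zmodType.
Variable M : nat -> V.
Let S n := \sum_(k < n) M k.

Lemma Srec n : S n.+1 = S n + M n.
Proof. by rewrite /S big_ord_recr. Qed.

Lemma L4 n : \sum_(j < n.+1) S j + \sum_(j < n) M j *+ j.+1 = S n *+ n.+1.
Proof.
elim: n => [|n IH]; first by rewrite !big_ord_recr !big_ord0 /= /S !big_ord0 !addr0 mulr1n.
rewrite big_ord_recr [X in _ + X]big_ord_recr /=.
rewrite addrACA IH addrCA -mulrnDl -Srec -mulrS.
by [].
Qed.

Lemma ab4 (a b c d e f g : V) : a + e = f -> b + c + d = g -> a + b + c + (d + e) = f + g.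
Proof.
move=> <- <-; rewrite -!addrA; congr (_ + _).
by rewrite [RHS]addrC -!addrA.
Qed.

Lemma L3 m : \sum_(j < m.+1) S j *+ (m - j + 1) + \sum_(j < m.+1) M j *+ ((m - j) * (j + 1))
  = \sum_(j < m.+1) S j *+ (j + 1).
Proof.
elim: m => [|m IH].
  by rewrite !big_ord_recr !big_ord0 /= !add0r mul0n mulr0n addr0.
rewrite big_ord_recr [X in _ + X]big_ord_recr [RHS]big_ord_recr /=.
rewrite subnn mul0n mulr0n addr0 add0n mulr1n.
rewrite (eq_bigr (fun j : 'I_m.+1 => S j *+ (m - j + 1) + S j)); last first.
  move=> j _ /=; have hj := ltn_ord j; rewrite -mulrSr (_ : (m.+1 - j + 1)%N = (m - j + 1).+1) //; lia.
rewrite [\sum_(j < m.+1) M j *+ _](eq_bigr (fun j : 'I_m.+1 => M j *+ (j + 1) + M j *+ ((m - j) * (j + 1)))); last first.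
  move=> j _ /=; have hj := ltn_ord j; rewrite -mulrnDr (_ : ((m.+1 - j) * (j + 1))%N = (j + 1 + (m - j) * (j + 1))%N) //.
  rewrite subSn //; lia.
rewrite !big_split /=.
apply: ab4; first exact: IH.
have := L4 m.+1; rewrite big_ord_recr /=.
move=> H; rewrite addn1 -H; congr (_ + _); apply: eq_bigr => j _; by rewrite addn1.
Qed.
End C.

Section G.
Variable R : realType.
Local Notation Q := (quat R).
Implicit Types p q r x y : Q.
Local Notation Q1 := (qone R).
Local Notation smooth := (@smooth R).
Local Notation Tcoef := (@Tcoef R).
Local Notation cm := (@cm R).

Lemma DF a b x u : 'D_u (fun y => qmul (qpow y a) (qpow (qconj y) b)) x =
 \sum_(k < a) qmul (qmul (qpow x k) u) (qmul (qpow x (a - k.+1)) (qpow (qconj x) b))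
 + \sum_(k < b) qmul (qmul (qmul (qpow x a) (qpow (qconj x) k)) (qconj u)) (qpow (qconj x) (b - k.+1)).
Proof.
have hid : smooth (fun y : Q => y) by exact: smooth_id.
have hc : smooth (fun y : Q => qconj y) by exact: smooth_conj.
rewrite D_mul; [|exact: smooth_pow|exact: smooth_pow].
rewrite (@D_pow R (fun y => y)) // (@D_pow R (fun y => qconj y)) // D_conj // D_id.
rewrite qmul_suml qmul_sumr; congr (_ + _); apply: eq_bigr => k _.
  by rewrite qmulA.
by rewrite !qmulA.
Qed.

Definition W x (i j : nat) := qmul (qpow x i) (qpow (qconj x) j).

Lemma Wconj x (i j : nat) : qconj (W x i j) = W x j i.
Proof. by rewrite /W qconj_mul !qconj_pow qconjK. Qed.
Lemma Wmulr x (i j e : nat) : qmul (W x i j) (qpow (qconj x) e) = W x i (j + e).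
Proof. by rewrite /W -qmulA qpowD. Qed.
Lemma Wmull x (i j e : nat) : qmul (qpow (qconj x) e) (W x i j) = W x i (e + j).
Proof.
rewrite /W qmulA -qpow_comm2; last exact: qconj_comm.
by rewrite -qmulA qpowD.
Qed.

Lemma DopF a b x : Dop (fun y => qmul (qpow y a) (qpow (qconj y) b)) x =
  \sum_(k < a) ((-2) *: W x (a - k.+1) (k + b))
  + \sum_(k < b) (2 *: (W x a (k + (b - k.+1)) + W x k (a + (b - k.+1)))).
Proof.
rewrite (@Dop_gen _ _ x a b (fun k => qpow x k) (fun k => qmul (qpow x (a - k.+1)) (qpow (qconj x) b))
   (fun k => W x a k) (fun k => qpow (qconj x) (b - k.+1))); last first.
  by move=> u; rewrite DF.
congr (_ + _); apply: eq_bigr => k _.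
  by rewrite qmulZl qconj_pow -/(W x _ _) Wmull.
by rewrite qmulZl qmulDl Wconj !Wmulr.
Qed.

Lemma sum_rev (V : zmodType) m (G : nat -> V) :
  \sum_(j < m.+1) G (m - j)%N = \sum_(j < m.+1) G j.
Proof.
rewrite -(big_mkord xpredT G) big_rev_mkord subn0; apply: eq_bigr => j _.
by rewrite subSS.
Qed.
Lemma sum_rev2 (V : zmodType) a (G : nat -> V) :
  \sum_(k < a) G (a - k.+1)%N = \sum_(k < a) G k.
Proof. by rewrite -(big_mkord xpredT G) big_rev_mkord subn0. Qed.

Lemma DopM m a b x : (a + b)%N = m ->
  Dop (fun y => qmul (qpow y a) (qpow (qconj y) b)) x =
  (-2) *: \sum_(k < a) W x k (m.-1 - k) + 2 *: (W x a (m.-1 - a) *+ b + \sum_(k < b) W x k (m.-1 - k)).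
Proof.
move=> hm; rewrite DopF -!scaler_sumr; congr (_ + _).
  rewrite -(@sum_rev2 Q a (fun k => W x k (m.-1 - k))); congr (_ *: _); apply: eq_bigr => k _.
  have hk := ltn_ord k; congr (W x _ _); lia.
congr (_ *: _).
rewrite (eq_bigr (fun k : 'I_b => W x a (m.-1 - a) + W x k (m.-1 - k))); last first.
  by move=> k _; have hk := ltn_ord k; congr (_ + _); congr (W x _ _); lia.
by rewrite big_split /= sumr_const card_ord.
Qed.

Lemma q0MN (v : Q) n : q0 (v *+ n) = q0 v *+ n.
Proof. by rewrite -scaler_nat q0Z mulr_natl. Qed.
Lemma q1MN (v : Q) n : q1 (v *+ n) = q1 v *+ n.
Proof. by rewrite -scaler_nat q1Z mulr_natl. Qed.
Lemma q2MN (v : Q) n : q2 (v *+ n) = q2 v *+ n.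
Proof. by rewrite -scaler_nat q2Z mulr_natl. Qed.
Lemma q3MN (v : Q) n : q3 (v *+ n) = q3 v *+ n.
Proof. by rewrite -scaler_nat q3Z mulr_natl. Qed.

Lemma term_eq m (j : nat) (A B C : Q) : (j <= m)%N ->
  Tcoef m j *: ((-2) *: A + 2 *: (B *+ j + C)) =
  (4 / ((m + 1)%:R * (m + 2)%:R)) *: (C *+ (m - j + 1) - A *+ (m - j + 1) + B *+ (j * (m - j + 1))).
Proof.
move=> hj; rewrite /Tcoef.
apply: qP; qsimp2; rewrite ?q0MN ?q1MN ?q2MN ?q3MN ?natrM; ring.
Qed.

Lemma key m (M : nat -> Q) :
  \sum_(j < m.+1) Tcoef m j *: ((-2) *: \sum_(k < m - j) M k
     + 2 *: (M (m - j)%N *+ j + \sum_(k < j) M k)) = 0.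
Proof.
rewrite (eq_bigr (fun j : 'I_m.+1 => (4 / ((m + 1)%:R * (m + 2)%:R)) *:
   ((\sum_(k < j) M k) *+ (m - j + 1) - (\sum_(k < m - j) M k) *+ (m - j + 1)
    + M (m - j)%N *+ (j * (m - j + 1))))); last first.
  by move=> j _; rewrite term_eq //; rewrite -ltnS.
rewrite -scaler_sumr big_split /= sumrB.
rewrite (@sum_rev Q m (fun j => (\sum_(k < j) M k) *+ (j + 1))).
rewrite [\sum_(j < m.+1) M (m - j)%N *+ _](eq_bigr (fun j : 'I_m.+1 => M (m - j)%N *+ ((m - (m - j)) * (m - j + 1)))); last first.
  move=> j _; have hj := ltn_ord j; congr (_ *+ _); rewrite subKn //; lia.
rewrite (@sum_rev Q m (fun j => M j *+ ((m - j) * (j + 1)))).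
rewrite -(@L3 Q M m) opprD addrA subrr add0r addNr scaler0.
by [].
Qed.

Lemma Dop_scale (k : R) f x : smooth f -> Dop (fun y => k *: f y) x = k *: Dop f x.
Proof. by move=> hf; rewrite /Dop !D_scale // !qmulZr !scalerDr. Qed.

Lemma Dop_sum n (F : 'I_n -> Q -> Q) x : (forall i, smooth (F i)) ->
  Dop (fun y => \sum_(i < n) F i y) x = \sum_(i < n) Dop (F i) x.
Proof. by move=> hF; rewrite /Dop !D_sum // !qmul_sumr -!big_split. Qed.

Lemma smoothF a b : smooth (fun y => qmul (qpow y a) (qpow (qconj y) b)).
Proof.
apply: smooth_mul; apply: smooth_pow; [exact: smooth_id | apply: smooth_conj; exact: smooth_id].
Qed.

Lemma smooth_Pm m : smooth (@Pm R m).
Proof.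
rewrite /Pm; apply: smooth_scale; apply: smooth_sum => j; apply: smooth_scale; exact: smoothF.
Qed.

Lemma Dop_Pm m x : Dop (@Pm R m) x = 0.
Proof.
rewrite /Pm Dop_scale; last by apply: smooth_sum => j; apply: smooth_scale; exact: smoothF.
rewrite Dop_sum; last by move=> j; apply: smooth_scale; exact: smoothF.
rewrite (eq_bigr (fun j : 'I_m.+1 => Tcoef m j *: ((-2) *: \sum_(k < m - j) W x k (m.-1 - k)
     + 2 *: (W x (m - j)%N (m.-1 - (m - j)) *+ j + \sum_(k < j) W x k (m.-1 - k))))); last first.
  move=> j _; rewrite Dop_scale; last exact: smoothF.
  by rewrite (@DopM m) // subnK // -ltnS.
by rewrite (key m (fun k => W x k (m.-1 - k))) scaler0.
Qed.

Lemma Bodd n : \sum_(j < n) (-1)^+j = (odd n)%:R :> R.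
Proof.
elim: n => [|n IH]; first by rewrite big_ord0.
rewrite big_ord_recr /= IH -signr_odd; case: (odd n) => /=.
  by rewrite expr1 addrN.
by rewrite expr0 add0r.
Qed.

Lemma Apos m : 1 <= \sum_(j < m.+1) (-1)^+j * (m - j + 1)%:R :> R.
Proof.
elim: m => [|m IH]; first by rewrite big_ord_recr big_ord0 /= add0r expr0 mul1r.
rewrite big_ord_recr /= subnn add0n mulr1.
rewrite (eq_bigr (fun j : 'I_m.+1 => (-1)^+j * (m - j + 1)%:R + (-1)^+j)); last first.
  by move=> j _; have hj := ltn_ord j; rewrite (_ : (m.+1 - j + 1 = (m - j + 1) + 1)%N) ?natrD ?mulrDr ?mulr1 //; lia.
rewrite big_split /=.
have := Bodd m.+2; rewrite big_ord_recr /= => hB.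
have h0 : 0 <= (odd m.+2)%:R :> R := ler0n _ _.
lra.
Qed.

Lemma cm_gt0 m : 0 < cm m.
Proof.
have -> : cm m = 2 / ((m + 1)%:R * (m + 2)%:R) * \sum_(j < m.+1) (-1)^+j * (m - j + 1)%:R.
  by rewrite /cm mulr_sumr; apply: eq_bigr => j _; rewrite /Tcoef; ring.
apply: mulr_gt0; last by have := Apos m; lra.
by apply: divr_gt0 => //; apply: mulr_gt0; rewrite ltr0n addn_gt0 orbT.
Qed.

Lemma Pm_restr m (x1 x2 x3 : R) : Pm m (qmk 0 x1 x2 x3) = qpow (qmk 0 x1 x2 x3) m.
Proof.
set v := qmk 0 x1 x2 x3.
have hc : qconj v = (-1) *: v by rewrite /v; qring2.
rewrite /Pm hc.
rewrite (eq_bigr (fun j : 'I_m.+1 => ((-1)^+j * Tcoef m j) *: qpow v m)); last first.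
  move=> j _; have hj : (j <= m)%N by rewrite -ltnS.
  by rewrite qpowZ qmulZr qpowD subnK // scalerA mulrC.
rewrite -scaler_suml -/(cm m) scalerA mulVf ?scale1r //.
by apply: lt0r_neq0; exact: cm_gt0.
Qed.

Lemma P1_eq x : Pm 1 x = qmk (3 * q0 x) (q1 x) (q2 x) (q3 x).
Proof.
rewrite /Pm /cm /Tcoef !big_ord_recr !big_ord0 /= !subn0 !subnn.
by apply: qP; qsimp2; field.
Qed.

Lemma P1_zeta x : Pm 1 x = qmul (zeta1 x) (qe1 R) + qmul (zeta2 x) (qe2 R) + qmul (zeta3 x) (qe3 R).
Proof. rewrite P1_eq /zeta1 /zeta2 /zeta3; qring2. Qed.
End G.

Theorem mainTheorem3 (R : realType) :
  (forall m : nat,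
     left_hyperholomorphic (@Pm R m) /\
     (forall x1 x2 x3 : R,
        Pm m (qmk 0 x1 x2 x3) = qpow (qmk 0 x1 x2 x3) m) /\
     is_CK_extension (fun x1 x2 x3 : R => qpow (qmk 0 x1 x2 x3) m) (@Pm R m))
  /\
  (forall x : quat R,
     Pm 1 x = qmul (zeta1 x) (qe1 R) + qmul (zeta2 x) (qe2 R)
              + qmul (zeta3 x) (qe3 R) /\
     Pm 1 x = qmk (3 * q0 x) (q1 x) (q2 x) (q3 x)).
Proof.
have hh : forall m, left_hyperholomorphic (@Pm R m).
  by move=> m; split; [exact: smooth_Pm | exact: Dop_Pm].
split.
  move=> m; split; first exact: hh.
  split; first exact: Pm_restr.
  by split; [exact: hh | exact: Pm_restr].
by move=> x; split; [exact: P1_zeta | exact: P1_eq].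
Qed.
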